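(* Let $K$ be a finite field and $R_2=K[x_1,x_2,\ldots]/(x_1^2,x_2^2,\ x_i-x_{i+2}^2 \mid i\geqslant 1)$. Then $R_2$ has exactly one prime ideal $\mathfrak m$, this ideal satisfies $\mathfrak m^2=\mathfrak m\neq 0$ (so every prime ideal of $R_2$ has avoidance), but $R_2$ is not an avoidance ring.
   Context: All rings are commutative with $1\neq 0$. An ideal $I$ of a ring $R$ has avoidance if whenever $I_1,\ldots,I_n$ are finitely many ideals of $R$ with $I\subseteq\bigcup_{k=1}^n I_k$, then $I\subseteq I_k$ for some $k$. A ring is an avoidance ring if every ideal of it has avoidance. *)

(* Defs.v *)
From mathcomp Require Import all_boot all_algebra all_field.
Set Implicit Arguments. Unset Strict Implicit. Unset Printing Implicit Defensive.
Import GRing.Theory.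
Local Open Scope ring_scope.

Definition is_ideal (R : comNzRingType) (I : R -> Prop) : Prop :=
  I 0 /\ (forall a b, I a -> I b -> I (a + b)) /\ (forall r a, I a -> I (r * a)).

Definition is_prime_ideal (R : comNzRingType) (I : R -> Prop) : Prop :=
  is_ideal I /\ ~ I 1 /\ (forall a b, I (a * b) -> I a \/ I b).

Definition ideal_mul (R : comNzRingType) (I J : R -> Prop) : R -> Prop :=
  fun x => exists (n : nat) (a b : 'I_n -> R),
    (forall i, I (a i) /\ J (b i)) /\ x = \sum_(i < n) a i * b i.

Definition has_avoidance (R : comNzRingType) (I : R -> Prop) : Prop :=
  forall (n : nat) (J : 'I_n -> R -> Prop),
    (forall k, is_ideal (J k)) ->
    (forall x, I x -> exists k, J k x) ->
    exists k, forall x, I x -> J k x.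

Definition avoidance_ring (R : comNzRingType) : Prop :=
  forall I : R -> Prop, is_ideal I -> has_avoidance I.

Definition is_alg_hom (K : fieldType) (A B : comAlgType K) (f : A -> B) : Prop :=
  (forall a b, f (a + b) = f a + f b) /\ (forall a b, f (a * b) = f a * f b) /\
  f 1 = 1 /\ (forall (k : K) a, f (k *: a) = k *: f a).

(* Relations defining R_2, with x_{i+1} written as x i (0-based indexing):
   x_1^2 = 0, x_2^2 = 0, x_i = x_{i+2}^2 for i >= 1. *)
Definition R2_relations (K : fieldType) (S : comAlgType K) (y : nat -> S) : Prop :=
  y 0%N ^+ 2 = 0 /\ y 1%N ^+ 2 = 0 /\ (forall i : nat, y i = y i.+2 ^+ 2).

(* (R, x) is the commutative K-algebra K[x_1,x_2,...]/(x_1^2, x_2^2, x_i - x_{i+2}^2),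
   characterized by its universal property as a presented K-algebra. *)
Definition is_R2 (K : fieldType) (R : comAlgType K) (x : nat -> R) : Prop :=
  R2_relations x /\
  forall (S : comAlgType K) (y : nat -> S), R2_relations y ->
    exists f : R -> S, is_alg_hom f /\ (forall i, f (x i) = y i) /\
      forall g : R -> S, is_alg_hom g -> (forall i, g (x i) = y i) ->
        forall r, g r = f r.

(* Main.v *)
Require Import Defs.
From HB Require Import structures.
From mathcomp Require Import all_boot all_order all_algebra all_field.
Import Order.TTheory GRing.Theory Num.Theory.
From mathcomp Require Import boolp.
From Stdlib Require Classical_Prop.
From mathcomp Require Import ring zify.
From mathcomp Require Import finmap.
From mathcomp.multinomials Require Import monalg.
Import GRing.Theory.
Local Open Scope ring_scope.
Set Implicit Arguments. Unset Strict Implicit. Unset Printing Implicit Defensive.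

Section AlgHom.
Variable K : fieldType.

Lemma ah0 (A B : comAlgType K) (f : A -> B) : is_alg_hom f -> f 0 = 0.
Proof.
move=> [hD _]; by apply: (addrI (f 0)); rewrite -hD !addr0.
Qed.

Lemma ahN (A B : comAlgType K) (f : A -> B) : is_alg_hom f -> forall a, f (- a) = - f a.
Proof.
move=> hf a; have [hD _] := hf; apply/eqP; rewrite -subr_eq0 opprK -hD addNr.
by rewrite (ah0 hf).
Qed.

Lemma ahB (A B : comAlgType K) (f : A -> B) : is_alg_hom f -> forall a b, f (a - b) = f a - f b.
Proof. by move=> hf a b; have [hD _] := hf; rewrite hD (ahN hf). Qed.

Lemma ahX (A B : comAlgType K) (f : A -> B) : is_alg_hom f -> forall a n, f (a ^+ n) = f a ^+ n.
Proof.
move=> [_ [hM [h1 _]]] a; elim=> [|n IH]; first by rewrite !expr0.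
by rewrite !exprS hM IH.
Qed.

Lemma ah_comp (A B C : comAlgType K) (f : A -> B) (g : B -> C) :
  is_alg_hom f -> is_alg_hom g -> is_alg_hom (fun a => g (f a)).
Proof.
move=> [fD [fM [f1 fZ]]] [gD [gM [g1 gZ]]]; split; first by move=> a b; rewrite fD gD.
split; first by move=> a b; rewrite fM gM.
by split; [rewrite f1 g1 | move=> k a; rewrite fZ gZ].
Qed.

Lemma ah_id (A : comAlgType K) : is_alg_hom (fun a : A => a).
Proof. by []. Qed.

End AlgHom.

Section Gen.
Variable K : finFieldType.
Variable R : comAlgType K.
Variable x : nat -> R.
Hypothesis hx : is_R2 x.

Definition Lx (N : nat) (r : R) := exists a b, r = a * x N.*2 + b * x N.*2.+1.

Lemma rel_x i : x i = x i.+2 ^+ 2.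
Proof. by case: hx => [[_ [_ h]] _]. Qed.

Lemma LxS N r : Lx N r -> Lx N.+1 r.
Proof.
move=> [a [b ->]]; exists (a * x N.+1.*2), (b * x N.+1.*2.+1).
by rewrite doubleS (rel_x N.*2) (rel_x N.*2.+1) !expr2 !mulrA.
Qed.

Lemma Lx_le N M r : (N <= M)%N -> Lx N r -> Lx M r.
Proof.
move=> /subnK <-; elim: (M - N)%N => [|k IH] //= h.
by rewrite addSn; apply: LxS; apply: IH.
Qed.

Lemma Lx0 N : Lx N 0.
Proof. by exists 0, 0; rewrite !mul0r addr0. Qed.

Lemma LxD N r s : Lx N r -> Lx N s -> Lx N (r + s).
Proof.
move=> [a [b ->]] [c [d ->]]; exists (a + c), (b + d); ring.
Qed.

Lemma LxM N r s : Lx N s -> Lx N (r * s).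
Proof.
move=> [a [b ->]]; exists (r * a), (r * b); ring.
Qed.

Lemma LxN N r : Lx N r -> Lx N (- r).
Proof. by move=> h; rewrite -mulN1r; apply: LxM. Qed.

Lemma LxZ N (c : K) r : Lx N r -> Lx N (c *: r).
Proof. by move=> h; rewrite -mulr_algl; apply: LxM. Qed.

Definition Q (r : R) := exists (c : K) N l, Lx N l /\ r = c *: 1 + l.
Definition Qb : pred R := fun r => `[< Q r >].

Lemma Q_closed : GRing.subalg_closed Qb.
Proof.
split.
- apply/asboolP; exists 1, 0%N, 0; split; [exact: Lx0|by rewrite scale1r addr0].
- move=> a u v /asboolP [c [N [l [hl ->]]]] /asboolP [c' [N' [l' [hl' ->]]]].
  apply/asboolP; exists (a * c + c'), (maxn N N'), (a *: l + l'); split.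
    have h1 : Lx (maxn N N') l by apply: Lx_le hl; rewrite leq_maxl.
    have h2 : Lx (maxn N N') l' by apply: Lx_le hl'; rewrite leq_maxr.
    by apply: LxD => //; apply: LxZ.
  by rewrite scalerDr scalerA addrACA scalerDl.
- move=> u v /asboolP [c [N [l [hl ->]]]] /asboolP [c' [N' [l' [hl' ->]]]].
  apply/asboolP; exists (c * c'), (maxn N N'), (c *: l' + c' *: l + l * l'); split.
    have h1 : Lx (maxn N N') l by apply: Lx_le hl; rewrite leq_maxl.
    have h2 : Lx (maxn N N') l' by apply: Lx_le hl'; rewrite leq_maxr.
    by apply: LxD; [apply: LxD; apply: LxZ|apply: LxM].
  have -> : (c * c') *: (1 : R) = c%:A * c'%:A by rewrite -scalerAl mul1r scalerA.
  rewrite -![c *: l']mulr_algl -![c' *: l]mulr_algl.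
  move: (c%:A) (c'%:A) => C C'; ring.
Qed.


HB.instance Definition _ := GRing.isSubalgClosed.Build K R Qb Q_closed.
Record B := MkB { bval :> R; bP : Qb bval }.
HB.instance Definition _ := [isSub for bval].
HB.instance Definition _ := [Choice of B by <:].
HB.instance Definition _ := [SubChoice_isSubAlgebra of B by <:].
Lemma BmulC : commutative (@GRing.mul B).
Proof. by move=> a b; apply: val_inj; rewrite /= mulrC. Qed.
HB.instance Definition _ := GRing.PzRing_hasCommutativeMul.Build B BmulC.

Lemma Qx i : Qb (x i).
Proof.
have [e he] : exists e : bool, i = ((i./2).*2 + e)%N.
  by exists (odd i); rewrite addnC odd_double_half.
move: (i./2) he => N ->.
apply/asboolP; exists 0, N, (x (N.*2 + e)%N); split; last by rewrite scale0r add0r.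
case: e => /=.
  by exists 0, 1; rewrite mul0r add0r mul1r addn1.
by exists 1, 0; rewrite mul0r addr0 mul1r addn0.
Qed.

Definition yB (i : nat) : B := MkB (Qx i).

Lemma Q_all r : Q r.
Proof.
have [[h0 [h1 hr]] hu] := hx.
have hy : R2_relations yB.
  split; [|split].
  - by apply: val_inj; rewrite /= -expr2 h0.
  - by apply: val_inj; rewrite /= -expr2 h1.
  - by move=> i; apply: val_inj; rewrite /= -expr2 -hr.
have [f [hf [hfx _]]] := hu _ _ hy.
have [f' [_ [_ huniq]]] := hu _ _ (proj1 hx).
have hg : is_alg_hom (fun r => bval (f r)).
  have [fD [fM [f1 fZ]]] := hf; split; first by move=> a b; rewrite fD.
  split; first by move=> a b; rewrite fM.
  by split; [rewrite f1 | move=> k a; rewrite fZ].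
have e1 := huniq _ hg (fun i => congr1 bval (hfx i)).
have e2 := huniq _ (ah_id R) (fun i => erefl).
have : Qb (bval (f r)) by exact: bP.
by rewrite e1 -e2 => /asboolP.
Qed.
End Gen.

Definition dpred : pred rat := fun q => (0 <= q) && (q < 2).
Definition D := {q : rat | dpred q}.
Definition Mo := option D.
HB.instance Definition _ := Choice.on Mo.

Lemma dpred0 : dpred 0. Proof. by []. Qed.
Definition d0 : D := exist _ 0 dpred0.
Definition mone : Mo := Some d0.
Definition mmul (a b : Mo) : Mo :=
  match a, b with Some a, Some b => insub (val a + val b) | _, _ => None end.

Lemma D_ge0 (a : D) : 0 <= val a. Proof. by case: a => q /= /andP[]. Qed.

Lemma mmul3 (a b c : D) :
  mmul (mmul (Some a) (Some b)) (Some c) = insub (val a + val b + val c).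
Proof.
rewrite /=; case: insubP => [d hd <-|hn] /=; first by [].
rewrite insubN //; apply: contra hn; rewrite /dpred => /andP[_ h].
rewrite addr_ge0 ?D_ge0 //=; apply: le_lt_trans h.
by rewrite lerDl D_ge0.
Qed.

Lemma mmulC : commutative mmul.
Proof. by case=> [a|] [b|] //=; rewrite addrC. Qed.

Lemma mmul0r x : mmul None x = None. Proof. by []. Qed.
Lemma mmulr0 x : mmul x None = None. Proof. by case: x. Qed.

Lemma mmulA : associative mmul.
Proof.
case=> [a|] [b|] [c|]; rewrite ?mmul0r ?mmulr0 //.
rewrite mmulC mmul3 mmul3; congr insub.
by rewrite addrC addrA.
Qed.

Lemma mul1m : left_id mone mmul.
Proof.
case=> [a|] //=; rewrite add0r; case: a => q hq /=.
by rewrite insubT.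
Qed.

Lemma mulm1 : right_id mone mmul.
Proof. by move=> a; rewrite mmulC mul1m. Qed.

Lemma unitm (a b : Mo) : mmul a b = mone -> a = mone /\ b = mone.
Proof.
case: a b => [a|] [b|] //=; case: insubP => // d _ hd [] hd0.
have : val a + val b = 0 by rewrite -hd hd0.
move/eqP; rewrite paddr_eq0 ?D_ge0 // => /andP[/eqP ha /eqP hb].
by split; congr Some; apply: val_inj.
Qed.

HB.instance Definition _ := Choice_isMonomialDef.Build Mo mmulA mul1m mulm1 unitm.
HB.instance Definition _ := MonomialDef_isConomialDef.Build Mo mmulC.



Section Model.
Variable K : fieldType.
Definition A := {malg K[Mo]}.

Definition uu (m : Mo) : A := << m >> - << None >>.

Lemma UUM (m m' : Mo) : (<< m >> : A) * << m' >> = << mmul m m' >>.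
Proof. by rewrite malgM_def fgmulUU mulr1. Qed.

Lemma uuM m m' : uu m * uu m' = uu (mmul m m').
Proof.
rewrite /uu mulrBl !mulrBr !UUM mmulr0 mmul0r.
by rewrite mmul0r subrr subr0.
Qed.

Lemma uuN : uu None = 0.
Proof. by rewrite /uu subrr. Qed.

Definition dy (j : nat) : rat := (2%:R ^+ j)^-1.

Lemma dy_gt0 j : 0 < dy j.
Proof. by rewrite /dy invr_gt0 exprn_gt0. Qed.

Lemma dy_le1 j : dy j <= 1.
Proof.
rewrite /dy invr_le1 ?exprn_gt0 ?unitfE ?expf_eq0 //.
- by rewrite exprn_ege1.
- by rewrite andbF.
Qed.

Lemma dyP j : dpred (dy j).
Proof.
apply/andP; split; first exact: ltW (dy_gt0 j).
by apply: le_lt_trans (dy_le1 j) _.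
Qed.

Definition sdy j : Mo := Some (exist _ (dy j) (dyP j)).

Lemma dyS j : dy j.+1 + dy j.+1 = dy j.
Proof.
have h : (2%:R : rat) ^+ j != 0 by rewrite expf_eq0 andbF.
rewrite /dy exprS; field; by rewrite h.
Qed.

Lemma sdyS j : mmul (sdy j.+1) (sdy j.+1) = sdy j.
Proof.
have h : dpred (dy j.+1 + dy j.+1) by rewrite dyS dyP.
rewrite /= (insubT dpred h); congr Some; apply: val_inj => /=.
by rewrite dyS.
Qed.

Lemma sdy00 : mmul (sdy 0) (sdy 0) = None.
Proof.
by rewrite /= insubN.
Qed.

Definition ys (i : nat) : A := if odd i then 0 else uu (sdy i./2).
Definition yt (i : nat) : A := if odd i then uu (sdy i./2) else 0.

Lemma ys_rel : R2_relations ys.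
Proof.
split; first by rewrite /ys /= expr2 uuM sdy00 uuN.
split; first by rewrite /ys /= expr2 mul0r.
move=> i; rewrite /ys /=; case: (odd i) => /=; first by rewrite expr2 mul0r.
by rewrite expr2 uuM sdyS.
Qed.

Lemma yt_rel : R2_relations yt.
Proof.
split; first by rewrite /yt /= expr2 mul0r.
split; first by rewrite /yt /= expr2 uuM sdy00 uuN.
move=> i; rewrite /yt /=; case: (odd i) => /=; last by rewrite expr2 mul0r.
by rewrite expr2 uuM sdyS.
Qed.


Lemma coefM_U (g : A) (m k : Mo) :
  (g * << m >>)@_k = \sum_(k1 <- msupp g) g@_k1 *+ (mmul k1 m == k).
Proof.
rewrite malgM_def fgmulgU raddf_sum; apply: eq_bigr => k1 _.
by rewrite /= mcoeffU mulr1 eq_sym.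
Qed.

Lemma coef_sel (g : A) (a : Mo) :
  \sum_(k1 <- msupp g) g@_k1 *+ (k1 == a) = g@_a.
Proof.
rewrite [in RHS](monalgE g) raddf_sum; apply: eq_bigr => k _.
by rewrite /= mcoeffU.
Qed.

Lemma mmul_s1 k : (mmul k (sdy 0) == sdy 0) = (k == mone).
Proof.
case: k => [a|] //; apply/eqP/eqP => [h|->]; last exact: mul1m.
move: h => /=.
case: insubP => // d _ hd [] hd'.
have ha : val a = val d0.
  by apply: (addIr (dy 0)); rewrite /= add0r -hd hd'.
by congr Some; apply: val_inj.
Qed.

Lemma coef_key (g : A) : (g * uu (sdy 0))@_(sdy 0) = g@_mone.
Proof.
rewrite /uu mulrBr mcoeffB !coefM_U.
rewrite (eq_bigr (fun k1 => g@_k1 *+ (k1 == mone))); last by move=> k1 _; rewrite mmul_s1.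
rewrite coef_sel big1 ?subr0 // => k1 _.
by rewrite mmulr0.
Qed.

Lemma coef_Zu (c : K) : (c *: uu (sdy 0))@_(sdy 0) = c.
Proof. by rewrite mcoeffZ /uu mcoeffB !mcoeffU1 eqxx /= subr0 mulr1. Qed.

Definition eps (g : A) : K^o := g@_mone.

Lemma eps_hom : is_alg_hom eps.
Proof.
have [hM h1] := @mcoeff1g_is_multiplicative Mo K.
split; first by move=> a b; rewrite /eps mcoeffD.
split; first by move=> a b; exact: hM.
split; first exact: h1.
by move=> c a; rewrite /eps mcoeffZ.
Qed.

Lemma sdy_neq1 j : (sdy j == mone) = false.
Proof.
apply/negbTE/eqP => h.
have := congr1 (fun o : Mo => if o is Some d then val d else 1) h.
by rewrite /= => /eqP; rewrite gt_eqF // dy_gt0.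
Qed.

Lemma eps_uu j : eps (uu (sdy j)) = 0.
Proof. by rewrite /eps /uu mcoeffB !mcoeffU1 sdy_neq1 /= subrr. Qed.

Lemma eps_ys i : eps (ys i) = 0.
Proof.
rewrite /ys; case: (odd i); last exact: eps_uu.
by rewrite /eps mcoeff0.
Qed.

Lemma eps_yt i : eps (yt i) = 0.
Proof.
rewrite /yt; case: (odd i); first exact: eps_uu.
by rewrite /eps mcoeff0.
Qed.

Lemma uu1_neq0 : uu (sdy 0) != 0.
Proof.
apply/eqP => h; have := coef_Zu 1; rewrite scale1r h mcoeff0 => /eqP.
by rewrite eq_sym oner_eq0.
Qed.

End Model.

Section Ideals.
Variable R : comNzRingType.
Variable I : R -> Prop.
Hypothesis hI : is_ideal I.
Lemma I0 : I 0. Proof. by case: hI. Qed.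
Lemma ID a b : I a -> I b -> I (a + b). Proof. by case: hI => _ [h _]; apply: h. Qed.
Lemma IM r a : I a -> I (r * a). Proof. by case: hI => _ [_ h]; apply: h. Qed.
Lemma IMr r a : I a -> I (a * r). Proof. by rewrite mulrC; apply: IM. Qed.
Lemma IN a : I a -> I (- a). Proof. by move=> h; rewrite -mulN1r; apply: IM. Qed.
Lemma IB a b : I a -> I b -> I (a - b). Proof. by move=> ha hb; apply: ID ha (IN hb). Qed.
Lemma Isum n (F : 'I_n -> R) : (forall i, I (F i)) -> I (\sum_(i < n) F i).
Proof. by move=> h; apply: (big_ind I I0 ID) => i _; apply: h. Qed.
End Ideals.

Lemma nil_ge (R : comNzRingType) (a : R) m k : a ^+ m = 0 -> (m <= k)%N -> a ^+ k = 0.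
Proof. by move=> h /subnK <-; rewrite exprD h mulr0. Qed.

Lemma nilD (R : comNzRingType) (a b : R) m n :
  a ^+ m = 0 -> b ^+ n = 0 -> (a + b) ^+ (m + n) = 0.
Proof.
move=> ha hb; rewrite exprDn big1 // => i _.
case: (leqP n i) => h.
  by rewrite (nil_ge hb h) mulr0 mul0rn.
rewrite (@nil_ge _ a m) ?mul0r ?mul0rn //.
have := ltn_ord i; lia.
Qed.

Lemma geom (R : comNzRingType) (w : R) k : (1 - w) * \sum_(i < k) w ^+ i = 1 - w ^+ k.
Proof.
elim: k => [|k IH]; first by rewrite big_ord0 mulr0 expr0 subrr.
by rewrite big_ord_recr /= mulrDr IH exprSr; ring.
Qed.

Section Main.
Variable K : finFieldType.
Variable R : comAlgType K.
Variable x : nat -> R.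
Hypothesis hx : is_R2 x.

Lemma rels0 : R2_relations (fun _ : nat => (0 : K^o)).
Proof. by split; [|split]; rewrite ?expr2 ?mul0r. Qed.

Definition phiE := proj2 hx _ _ rels0.
Definition phi : R -> K^o := projT1 (cid phiE).
Lemma phi_hom : is_alg_hom phi. Proof. exact: (proj1 (projT2 (cid phiE))). Qed.
Lemma phi_x i : phi (x i) = 0. Proof. exact: (proj1 (proj2 (projT2 (cid phiE)))). Qed.
Lemma phi_uniq g : is_alg_hom g -> (forall i, g (x i) = 0) -> forall r, g r = phi r.
Proof. exact: (proj2 (proj2 (projT2 (cid phiE)))). Qed.

Lemma phiD a b : phi (a + b) = phi a + phi b. Proof. by case: phi_hom. Qed.
Lemma phiM a b : phi (a * b) = phi a * phi b. Proof. by case: phi_hom => _ []. Qed.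
Lemma phi1 : phi 1 = 1. Proof. by case: phi_hom => _ [_ []]. Qed.
Lemma phiZ c a : phi (c *: a) = c *: phi a. Proof. by case: phi_hom => _ [_ [_]]. Qed.
Lemma phi0 : phi 0 = 0. Proof. exact: ah0 phi_hom. Qed.
Lemma phiB a b : phi (a - b) = phi a - phi b. Proof. exact: (ahB phi_hom a b). Qed.
Lemma phiC (c : K) : phi (c *: 1) = c.
Proof. by rewrite phiZ phi1 /= [_ *: _]mulr1. Qed.

Definition mm (r : R) := phi r = 0.

Lemma phi_Lx N l : Lx x N l -> phi l = 0.
Proof. by move=> [a [b ->]]; rewrite phiD !phiM !phi_x !mulr0 addr0. Qed.

Lemma decomp r : exists N l, Lx x N l /\ r = phi r *: 1 + l.
Proof.
have [c [N [l [hl ->]]]] := Q_all hx r.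
exists N, l; split => //; by rewrite phiD phiC (phi_Lx hl) addr0.
Qed.

Lemma mm_Lx r : mm r -> exists N, Lx x N r.
Proof.
move=> h; have [N [l [hl e]]] := decomp r; exists N.
by rewrite e h scale0r add0r.
Qed.

Lemma Lx_mm N l : Lx x N l -> mm l. Proof. exact: phi_Lx. Qed.

Lemma mm_ideal : is_ideal mm.
Proof.
split; first exact: phi0.
split; first by move=> a b ha hb; rewrite /mm phiD ha hb addr0.
by move=> r a ha; rewrite /mm phiM ha mulr0.
Qed.

Lemma x_nil N e : x (N.*2 + nat_of_bool e)%N ^+ (2 ^ N.+1) = 0.
Proof.
have [[h0 [h1 hr]] _] := hx.
elim: N => [|N IH]; first by case: e.
by rewrite expnS exprM doubleS !addSn -hr.
Qed.

Lemma Lx_nil N l : Lx x N l -> l ^+ (2 ^ N.+1 + 2 ^ N.+1) = 0.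
Proof.
move=> [a [b ->]]; apply: nilD; rewrite exprMn.
  by have := x_nil N false; rewrite addn0 => ->; rewrite mulr0.
by have := x_nil N true; rewrite addn1 => ->; rewrite mulr0.
Qed.

Lemma mm_nil r : mm r -> exists k, r ^+ k = 0.
Proof. by move=> /mm_Lx [N hN]; eexists; apply: Lx_nil hN. Qed.

Lemma mm_unit w : mm w -> exists s, s * (1 - w) = 1.
Proof.
move=> /mm_nil [k hk]; exists (\sum_(i < k) w ^+ i).
by rewrite mulrC geom hk subr0.
Qed.

Section Prime.
Variable p : R -> Prop.
Hypothesis hp : is_prime_ideal p.

Lemma p_ideal : is_ideal p. Proof. by case: hp. Qed.
Lemma p_prime a b : p (a * b) -> p a \/ p b. Proof. by case: hp => _ [_]; apply. Qed.
Lemma p_not1 : ~ p 1. Proof. by case: hp => _ []. Qed.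

Lemma p_sq a : p (a ^+ 2) -> p a.
Proof. by rewrite expr2 => /p_prime []. Qed.

Lemma p_x j : p (x j) /\ p (x j.+1).
Proof.
have [[h0 [h1 hr]] _] := hx.
elim: j => [|j [IH0 IH]].
  by split; apply: p_sq; rewrite ?h0 ?h1; apply: (I0 p_ideal).
by split => //; apply: p_sq; rewrite -hr.
Qed.

Lemma p_Lx N l : Lx x N l -> p l.
Proof.
move=> [a [b ->]]; apply: (ID p_ideal); apply: (IM p_ideal).
  exact: (proj1 (p_x _)).
exact: (proj2 (p_x _)).
Qed.

Lemma p_eq r : p r <-> mm r.
Proof.
split; last by move/mm_Lx => [N]; apply: p_Lx.
move=> hr; have [N [l [hl e]]] := decomp r.
apply/eqP; apply: contraT => hc; exfalso; apply: p_not1.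
have hc1 : p (phi r *: 1) by rewrite -[_ *: _](addrK l) -e; apply: (IB p_ideal) => //; exact: p_Lx hl.
have -> : 1 = (phi r)^-1 *: 1 * (phi r *: (1 : R)).
  by rewrite -scalerAl mul1r scalerA mulVf // scale1r.
exact: (IM p_ideal).
Qed.
End Prime.

Lemma mm_prime : is_prime_ideal mm.
Proof.
split; first exact: mm_ideal.
split; first by rewrite /mm phi1; apply/eqP; exact: (oner_neq0 K).
move=> a b; rewrite /mm phiM => /eqP; rewrite (mulf_eq0 (R:=K)) => /orP [] /eqP h.
  by left.
by right.
Qed.

Lemma mm_sq r : ideal_mul mm mm r <-> mm r.
Proof.
split.
  move=> [n [a [b [hab ->]]]]; apply: (Isum mm_ideal) => i.
  by apply: (IM mm_ideal); case: (hab i).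
move/mm_Lx => [N [a [b ->]]].
have [[h0 [h1 hr]] _] := hx.
exists 2%N, (fun i : 'I_2 => if val i == 0%N then a * x N.+1.*2 else b * x N.+1.*2.+1).
exists (fun i : 'I_2 => if val i == 0%N then x N.+1.*2 else x N.+1.*2.+1).
split.
  move=> i; case: (val i == 0%N); split; rewrite /mm ?phiM ?phi_x ?mulr0 //.
rewrite !big_ord_recr big_ord0 /= add0r.
by rewrite (hr N.*2) (hr N.*2.+1) doubleS !expr2 !mulrA.
Qed.

Lemma nil_ideal : exists r, mm r /\ r <> 0.
Proof.
exists (x 0); split; first exact: phi_x.
move=> h0.
have [f [hf [hfx _]]] := proj2 hx _ _ (ys_rel K).
have := hfx 0%N; rewrite h0 (ah0 hf) /ys /= => /esym /eqP.
by rewrite (negbTE (uu1_neq0 K)).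
Qed.

Lemma list_bound (s : seq R) : exists N, forall t, t \in s -> mm t -> Lx x N t.
Proof.
elim: s => [|t s [N hN]]; first by exists 0%N.
case: (pselect (mm t)) => [/mm_Lx [M hM]|hnt].
  exists (maxn N M) => t'; rewrite inE => /orP [/eqP ->|ht] hm.
    by apply: (Lx_le hx _ hM); rewrite leq_maxr.
  by apply: (Lx_le hx _ (hN _ ht hm)); rewrite leq_maxl.
exists N => t'; rewrite inE => /orP [/eqP ->|ht] hm //.
exact: hN.
Qed.

Lemma neumann n : forall (J : nat -> R -> Prop) (T : nat -> seq R),
  (forall i, (i < n)%N -> is_ideal (J i)) ->
  (forall i r, (i < n)%N -> J i r -> mm r) ->
  (forall r, mm r -> exists i, (i < n)%N /\ exists t, t \in T i /\ J i (r - t)) ->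
  exists i, (i < n)%N /\ exists N, forall r, mm r -> exists l, Lx x N l /\ J i (r - l).
Proof.
elim: n => [|n IH] J T hJ hJm hcov.
  by have [i [hi _]] := hcov 0 phi0.
case: (pselect (exists N, forall r, mm r -> exists l, Lx x N l /\ J n (r - l))) => [hN|hno].
  by exists n; split.
have [u [mu hu]] : exists u, mm u /\ forall t, t \in T n -> ~ J n (u - t).
  apply: Classical_Prop.NNPP => hneg; apply: hno.
  have [N hN] := list_bound (T n).
  exists N => r mr.
  have [t [ht hJt]] : exists t, t \in T n /\ J n (r - t).
    apply: Classical_Prop.NNPP => h2; apply: hneg; exists r; split => // t ht hJt.
    by apply: h2; exists t.
  have mt : mm t.
    have -> : t = r - (r - t) by rewrite opprB addrC subrK.
    by apply: (IB mm_ideal) => //; apply: (hJm n).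
  by exists t; split => //; apply: hN.
pose T' i := T i ++ [seq t + t' - u | t <- T n, t' <- T i].
have [i [hi rest]] : exists i, (i < n)%N /\ exists N, forall r, mm r -> exists l, Lx x N l /\ J i (r - l).
  apply: (IH J T').
  - by move=> i hi; apply: hJ; apply: ltnW.
  - by move=> i r hi; apply: hJm; apply: ltnW.
  move=> r mr; have [i [hi [t [ht hJt]]]] := hcov r mr.
  case: (ltnP i n) => hin.
    by exists i; split => //; exists t; split => //; rewrite mem_cat ht.
  have ein : i = n by apply/eqP; rewrite eqn_leq hin -ltnS hi.
  subst i.
  have my : mm (u + (r - t)) by apply: (ID mm_ideal) => //; apply: (hJm n).
  have [i' [hi' [t' [ht' hJt']]]] := hcov _ my.
  case: (ltnP i' n) => hi'n; last first.
    have ei : i' = n by apply/eqP; rewrite eqn_leq hi'n -ltnS hi'.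
    subst i'; exfalso; apply: (hu t' ht').
    have -> : u - t' = (u + (r - t) - t') - (r - t) by ring.
    exact: (IB (hJ n hi)).
  exists i'; split => //; exists (t + t' - u); split.
    by rewrite mem_cat; apply/orP; right; apply: (allpairs_f (fun t t' => t + t' - u)).
  by have -> : r - (t + t' - u) = u + (r - t) - t' by ring.
by exists i; split => //; apply: ltnW.
Qed.

Lemma nakayama (J : R -> Prop) N : is_ideal J ->
  (forall r, mm r -> exists l, Lx x N l /\ J (r - l)) -> forall r, mm r -> J r.
Proof.
move=> hJ hcov.
have [[h0 [h1 hr]] _] := hx.
set u := x N.+1.*2; set v := x N.+1.*2.+1.
have [l1 [[a [b el1]] hd1]] := hcov u (phi_x _).
have [l2 [[c [e el2]] hd2]] := hcov v (phi_x _).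
have eu : x N.*2 = u ^+ 2 by rewrite /u doubleS -hr.
have ev : x N.*2.+1 = v ^+ 2 by rewrite /v doubleS -hr.
rewrite eu ev in el1 el2.
set d1 := u - l1 in hd1; set d2 := v - l2 in hd2.
pose w := u * (a - a * e * v + b * c * v) + e * v.
have mw : mm w.
  apply: (ID mm_ideal); [apply: (IMr mm_ideal)|apply: (IM mm_ideal)]; exact: phi_x.
have [s hs] := mm_unit mw.
have hu : J u.
  have key : (1 - w) * u = (1 - e * v) * d1 + b * v * d2.
    by rewrite /d1 /d2 el1 el2 /w; ring.
  have -> : u = s * ((1 - e * v) * d1 + b * v * d2).
    by rewrite -key mulrA hs mul1r.
  by apply: (IM hJ); apply: (ID hJ); apply: (IM hJ).
have hv : J v.
  have key : (1 - w) * v = (1 - a * u) * d2 + c * u * d1.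
    by rewrite /d1 /d2 el1 el2 /w; ring.
  have -> : v = s * ((1 - a * u) * d2 + c * u * d1).
    by rewrite -key mulrA hs mul1r.
  by apply: (IM hJ); apply: (ID hJ); apply: (IM hJ).
move=> r mr; have [l [[a' [b' el]] hl]] := hcov r mr.
have -> : r = (r - l) + l by rewrite subrK.
apply: (ID hJ) => //; rewrite el eu ev !expr2.
by apply: (ID hJ); apply: (IM hJ); apply: (IM hJ).
Qed.

Lemma avoid_mm : has_avoidance mm.
Proof.
move=> n J hJ hcov.
pose J' (i : nat) (r : R) := (exists h : (i < n)%N, J (Ordinal h) r) /\ mm r.
have hJ' : forall i, (i < n)%N -> is_ideal (J' i).
  move=> i hi; split; first by split; [exists hi; apply: (I0 (hJ _))|exact: phi0].
  split.
    move=> a b [[h ha] ma] [[h' hb] mb]; split; last exact: (ID mm_ideal).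
    exists h; apply: (ID (hJ _)) => //.
    by have -> : Ordinal h = Ordinal h' by apply: val_inj.
  move=> r a [[h ha] ma]; split; last exact: (IM mm_ideal).
  by exists h; apply: (IM (hJ _)).
have hJm : forall i r, (i < n)%N -> J' i r -> mm r by move=> i r _ [].
have hc : forall r, mm r -> exists i, (i < n)%N /\ exists t, t \in [:: 0] /\ J' i (r - t).
  move=> r mr; have [k hk] := hcov r mr.
  exists (val k); split; first exact: ltn_ord.
  exists 0; split; first by rewrite inE.
  rewrite subr0; split => //; exists (ltn_ord k).
  by have -> : Ordinal (ltn_ord k) = k by apply: val_inj.
have [i [hi [N hN]]] := @neumann n J' (fun _ => [:: 0]) hJ' hJm hc.
exists (Ordinal hi) => r mr.
have [[h hr] _] := nakayama (hJ' i hi) hN mr.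
by have <- : Ordinal h = Ordinal hi by apply: val_inj.
Qed.

Definition II (r : R) := exists f g, r = f * x 0 + g * x 1.
Definition JJ (ab : K * K) (r : R) := exists h a b, mm a /\ mm b /\
  r = h * (ab.1 *: x 0 + ab.2 *: x 1) + a * x 0 + b * x 1.

Lemma II_ideal : is_ideal II.
Proof.
split; first by exists 0, 0; rewrite !mul0r addr0.
split.
  by move=> _ _ [f [g ->]] [f' [g' ->]]; exists (f + f'), (g + g'); ring.
by move=> r _ [f [g ->]]; exists (r * f), (r * g); ring.
Qed.

Lemma JJ_ideal ab : is_ideal (JJ ab).
Proof.
split.
  exists 0; exists 0; exists 0; split; first exact: phi0.
  by split; [exact: phi0|rewrite !mul0r !addr0].
split.
  move=> _ _ [h [a [b [ma [mb ->]]]]] [h' [a' [b' [ma' [mb' ->]]]]].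
  exists (h + h'), (a + a'), (b + b'); split; first exact: (ID mm_ideal).
  split; first exact: (ID mm_ideal).
  move: (_ *: _ + _) => z; ring.
move=> r _ [h [a [b [ma [mb ->]]]]].
exists (r * h), (r * a), (r * b); split; first exact: (IM mm_ideal).
split; first exact: (IM mm_ideal).
move: (_ *: _ + _) => z; ring.
Qed.

Lemma eps_fact (y : nat -> A K) (hy : R2_relations y) (f : R -> A K) :
  (forall i, eps (y i) = 0) ->
  is_alg_hom f -> (forall i, f (x i) = y i) -> forall r, (f r)@_mone = phi r.
Proof.
move=> hy0 hf hfx r; rewrite -[LHS]/(eps (f r)).
have hg := ah_comp hf (eps_hom K).
have hgx : forall i, eps (f (x i)) = 0 by move=> i; rewrite hfx hy0.
exact: (phi_uniq hg hgx r).
Qed.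

Lemma key_coef (g d : K) ab : JJ ab (g *: x 0 + d *: x 1) ->
  exists c, g = c * ab.1 /\ d = c * ab.2.
Proof.
move=> [h [a [b [ma [mb E]]]]]; exists (phi h).
have [fs [hfs [hfsx _]]] := proj2 hx _ _ (ys_rel K).
have [ft [hft [hftx _]]] := proj2 hx _ _ (yt_rel K).
have es := eps_fact (ys_rel K) (@eps_ys K) hfs hfsx.
have et := eps_fact (yt_rel K) (@eps_yt K) hft hftx.
split.
  have [fD [fM [f1 fZ]]] := hfs.
  have := congr1 fs E; rewrite !(fD, fM, fZ, hfsx) /ys /= !scaler0 !mulr0 !addr0.
  move/(congr1 (mcoeff (sdy 0))); rewrite mcoeffD coef_Zu -scalerAr mcoeffZ !coef_key !es.
  by rewrite ma addr0 mulrC.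
have [fD [fM [f1 fZ]]] := hft.
have := congr1 ft E; rewrite !(fD, fM, fZ, hftx) /yt /= !scaler0 !mulr0 ?add0r ?addr0.
move/(congr1 (mcoeff (sdy 0))); rewrite mcoeffD coef_Zu -scalerAr mcoeffZ !coef_key !et.
by rewrite mb addr0 mulrC.
Qed.

Lemma not_avoid : ~ avoidance_ring R.
Proof.
move=> hav.
have hcov : forall r, II r -> exists k : 'I_#|{: (K * K)%type}|, JJ (enum_val k) r.
  move=> _ [f [g ->]]; exists (enum_rank (phi f, phi g)); rewrite enum_rankK.
  exists 1, (f - phi f *: 1), (g - phi g *: 1).
  split; first by rewrite /mm phiB phiC subrr.
  split; first by rewrite /mm phiB phiC subrr.
  rewrite !mulrBl -!scalerAl !mul1r /=.
  move: (phi f *: x 0) (phi g *: x 1) => A1 A2; ring.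
have [k hk] := hav II II_ideal _ (fun k : 'I_#|{: (K * K)%type}| => JJ (enum_val k))
  (fun k => JJ_ideal _) hcov.
move: (enum_val k) hk => ab hk.
case: (eqVneq ab.1 0) => h1.
  have : JJ ab (1 *: x 0 + 0 *: x 1).
    by rewrite scale1r scale0r addr0; apply: hk; exists 1, 0; rewrite mul1r mul0r addr0.
  move/key_coef => [c [e1 _]]; move: e1; rewrite h1 mulr0 => /eqP.
  by rewrite oner_eq0.
have : JJ ab (0 *: x 0 + 1 *: x 1).
  by rewrite scale1r scale0r add0r; apply: hk; exists 0, 1; rewrite mul1r mul0r add0r.
move/key_coef => [c [e1 e2]].
have c0 : c = 0.
  by move/esym/eqP: e1; rewrite mulf_eq0 (negbTE h1) orbF => /eqP.
by move/eqP: e2; rewrite c0 mul0r oner_eq0.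
Qed.

End Main.

Theorem mainTheorem11 (K : finFieldType) (R : comAlgType K) (x : nat -> R) :
  is_R2 x ->
  exists m : R -> Prop,
    is_prime_ideal m /\
    (forall p : R -> Prop, is_prime_ideal p -> forall r, p r <-> m r) /\
    (forall r, ideal_mul m m r <-> m r) /\
    (exists r, m r /\ r <> 0) /\
    (forall p : R -> Prop, is_prime_ideal p -> has_avoidance p) /\
    ~ avoidance_ring R.
Proof.
move=> hx; exists (mm hx).
split; first exact: (mm_prime hx).
split; first by move=> p hp r; apply: p_eq.
split; first exact: (mm_sq hx).
split; first exact: (nil_ideal hx).
split; last exact: (not_avoid hx).
move=> p hp n J hJ hcov.
have [k hk] := avoid_mm hJ (fun r mr => hcov r (proj2 (p_eq hx hp r) mr)).
by exists k => r pr; apply: hk; apply/(p_eq hx hp).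
Qed.
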